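(* Let $H_1,H_2$ be $r\times n$ matrices of rank $r$ over $\mathbb{F}_q$. Let $m$ be the number of pairs $(U,P)$ with $U\in\mathrm{GL}_r(\mathbb{F}_q)$ and $P$ an $n\times n$ permutation matrix such that $UH_2=H_1P$, let $m_u$ be the number of distinct $U$ occurring in such pairs and $m_p$ the number of distinct $P$ occurring in such pairs. Then for a fixed $U$ with $(U,P_1)$ such a pair, $(U,P_2)$ is also such a pair if and only if $P_2$ lies in the same right coset of $\mathrm{Sym}(H_1)$ as $P_1$. Consequently $m_p=m=m_u\,|\mathrm{Sym}(H_1)|$.
   Context: $\mathrm{Sym}(H_1)=\{P\in S_n: H_1P=H_1\}$ is the subgroup of permutation matrices leaving $H_1$ unchanged under column permutation. *)

(* Defs.v *)
From mathcomp Require Import all_boot all_order all_algebra all_fingroup.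
Set Implicit Arguments. Unset Strict Implicit. Unset Printing Implicit Defensive.
Import GRing.Theory.
Local Open Scope ring_scope.

Definition is_pair (F : finFieldType) (r n : nat) (H1 H2 : 'M[F]_(r, n))
  (U : 'M[F]_r) (P : 'M[F]_n) : bool :=
  [&& U \in unitmx, is_perm_mx P & U *m H2 == H1 *m P].

Definition SymH (F : finFieldType) (r n : nat) (H1 : 'M[F]_(r, n)) : {set 'M[F]_n} :=
  [set P : 'M[F]_n | is_perm_mx P && (H1 *m P == H1)].

Definition Sym_rcoset (F : finFieldType) (r n : nat) (H1 : 'M[F]_(r, n))
  (P1 : 'M[F]_n) : {set 'M[F]_n} :=
  [set S *m P1 | S in SymH H1].

Definition m_pairs (F : finFieldType) (r n : nat) (H1 H2 : 'M[F]_(r, n)) : nat :=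
  #|[set x : 'M[F]_r * 'M[F]_n | is_pair H1 H2 x.1 x.2]|.

Definition m_u (F : finFieldType) (r n : nat) (H1 H2 : 'M[F]_(r, n)) : nat :=
  #|[set U : 'M[F]_r | [exists P : 'M[F]_n, is_pair H1 H2 U P]]|.

Definition m_p (F : finFieldType) (r n : nat) (H1 H2 : 'M[F]_(r, n)) : nat :=
  #|[set P : 'M[F]_n | [exists U : 'M[F]_r, is_pair H1 H2 U P]]|.

(* Main.v *)
Require Import Defs.
From mathcomp Require Import all_boot all_order all_algebra all_fingroup.
Local Open Scope ring_scope.
Set Implicit Arguments. Unset Strict Implicit.
Import GRing.Theory.

Lemma perm_cancel (F : finFieldType) m n (s : 'S_n) (A : 'M[F]_(m, n)) :
  A *m perm_mx s *m perm_mx s^-1 = A.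
Proof. by rewrite -mulmxA -perm_mxM mulgV perm_mx1 mulmx1. Qed.

Lemma perm_inj (F : finFieldType) m n (P : 'M[F]_n) :
  is_perm_mx P -> injective (fun A : 'M[F]_(m, n) => A *m P).
Proof.
case/is_perm_mxP=> s -> A B /= E.
by rewrite -(perm_cancel s A) E perm_cancel.
Qed.

Lemma part1 (F : finFieldType) (r n : nat) (H1 H2 : 'M[F]_(r, n))
  (U : 'M[F]_r) (P1 P2 : 'M[F]_n) :
      is_pair H1 H2 U P1 -> is_perm_mx P2 ->
      (is_pair H1 H2 U P2 <-> P2 \in Sym_rcoset H1 P1).
Proof.
case/and3P=> Uu pP1 /eqP E1 pP2; rewrite /is_pair Uu pP2 /=.
case/is_perm_mxP: pP1 E1 => s -> E1.
split.
- move/eqP=> E2; apply/imsetP; exists (P2 *m perm_mx s^-1).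
    rewrite inE is_perm_mxMr ?perm_mx_is_perm // pP2 /=.
    by rewrite mulmxA -E2 E1 perm_cancel.
  by rewrite -mulmxA -perm_mxM mulVg perm_mx1 mulmx1.
- case/imsetP=> S; rewrite inE => /andP[_ /eqP ES] ->.
  by rewrite mulmxA ES E1.
Qed.

Theorem lemma2 (F : finFieldType) (r n : nat) (H1 H2 : 'M[F]_(r, n)) :
  \rank H1 = r -> \rank H2 = r ->
  (forall (U : 'M[F]_r) (P1 P2 : 'M[F]_n),
      is_pair H1 H2 U P1 -> is_perm_mx P2 ->
      (is_pair H1 H2 U P2 <-> P2 \in Sym_rcoset H1 P1))
  /\ m_p H1 H2 = m_pairs H1 H2
  /\ m_pairs H1 H2 = (m_u H1 H2 * #|SymH H1|)%N.
Proof.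
move=> rk1 rk2.
have fr2 : row_free H2 by rewrite /row_free rk2.
split; first exact: part1.
set Pairs := [set x : 'M[F]_r * 'M[F]_n | is_pair H1 H2 x.1 x.2].
split.
  rewrite /m_p /m_pairs -/Pairs.
  have -> : [set P : 'M[F]_n | [exists U : 'M[F]_r, is_pair H1 H2 U P]]
      = (fun x : 'M[F]_r * 'M[F]_n => x.2) @: Pairs.
    apply/setP=> P; rewrite inE; apply/existsP/imsetP.
      by case=> U HU; exists (U, P); rewrite ?inE.
    by case=> -[U P'] HU ->; rewrite inE /= in HU; exists U.
  apply: card_in_imset => [[U P]] [U' P']; rewrite !inE /=.
  case/and3P=> _ _ /eqP E; case/and3P=> _ _ /eqP E' EP.
  by rewrite EP -E' in E; rewrite (row_free_inj fr2 E) EP.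
set Us := [set U : 'M[F]_r | [exists P : 'M[F]_n, is_pair H1 H2 U P]].
pose pk (U : 'M[F]_r) : 'M[F]_n := odflt 0 [pick P | is_pair H1 H2 U P].
have pkP U : U \in Us -> is_pair H1 H2 U (pk U).
  rewrite inE /pk => /existsP[P HP].
  by case: pickP => [Q //|/(_ P)]; rewrite HP.
rewrite /m_pairs /m_u -/Pairs -/Us -cardsX.
have -> : Pairs = (fun x : 'M[F]_r * 'M[F]_n => (x.1, x.2 *m pk x.1))
                   @: setX Us (SymH H1).
  apply/setP=> [[U P]]; rewrite inE /=; apply/idP/imsetP.
  - move=> HP.
    have UU : U \in Us by rewrite inE; apply/existsP; exists P.
    have HP' := pkP U UU.
    have pP : is_perm_mx P by case/and3P: HP.
    case/imsetP: ((part1 HP' pP).1 HP) => S SS ->.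
    by exists (U, S); rewrite // in_setX UU SS.
  - case=> [[U' S]]; rewrite inE /= => /andP[UU SS] [-> ->].
    have HP' := pkP U' UU.
    have pS : is_perm_mx (S *m pk U').
      rewrite inE in SS; case/andP: SS => pS _.
      by rewrite is_perm_mxMl //; case/and3P: HP'.
    by apply/(part1 HP' pS).2; apply/imsetP; exists S.
apply: card_in_imset => [[U S]] [U' S']; rewrite !in_setX /=.
case/andP=> UU _ _ [EU ES]; subst U'.
have pk1 : is_perm_mx (pk U) by case/and3P: (pkP U UU).
by rewrite (perm_inj pk1 ES).
Qed.
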